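(* Let $f(x,y)=\sum_{i=0}^rf_iy^ix^{r-i}$ and $g(x,y)=\sum_{j=0}^sg_jy^jx^{s-j}$ be homogeneous polynomials of degrees $r$ and $s$. Then for $\nu\ge1$ the $\nu$-th $q$-derivative (with respect to $x$) of their $q$-product is $$\big(f(x,y)*g(x,y)\big)^{(\nu)}=\sum_{l=0}^{\nu}{\nu\brack l}q^{(\nu-l)(r-l)}f^{(l)}(x,y)*g^{(\nu-l)}(x,y).$$
   Context: $q\ge2$ is a prime power. Gaussian binomial ${\nu\brack l}=\prod_{i=0}^{l-1}\frac{q^\nu-q^i}{q^l-q^i}$ ($=1$ for $l=0$). $q$-derivative: for a real function $f$, $f^{(1)}(x)=\frac{f(qx)-f(x)}{(q-1)x}$ for $x\ne0$; for $f(x,y)$, $f^{(\nu)}$ denotes the $\nu$-fold iterate of this operator applied in the variable $x$, with $f^{(0)}=f$. $q$-product: for homogeneous polynomials $a(x,y;m)=\sum_{i=0}^{d}a_i(m)y^ix^{d-i}$ and $b(x,y;m)=\sum_{j=0}^{e}b_j(m)y^jx^{e-j}$ of degrees $d,e$, whose coefficients are real functions of a parameter $m$ (zero for indices outside the given ranges; constants allowed), $a*b=\sum_{u=0}^{d+e}c_u(m)y^ux^{d+e-u}$ with $c_u(m)=\sum_{i=0}^uq^{ie}a_i(m)b_{u-i}(m-i)$. *)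

(* Defs.v *)
From mathcomp Require Import all_boot all_order all_algebra.
Set Implicit Arguments. Unset Strict Implicit. Unset Printing Implicit Defensive.
Import GRing.Theory Num.Theory.
Local Open Scope ring_scope.

Definition gauss {R : fieldType} (q : R) (nu l : nat) : R :=
  \prod_(i < l) ((q ^+ nu - q ^+ i) / (q ^+ l - q ^+ i)).

Definition hev {R : ringType} (d : nat) (a : nat -> R) (x y : R) : R :=
  \sum_(i < d.+1) a i * y ^+ i * x ^+ (d - i).

(* q-product of a (degree d) and b (degree e), coefficients being functions of
   the parameter m : int; coefficients outside 0..d resp. 0..e count as zero. *)
Definition qprod {R : ringType} (q : R) (d e : nat) (a b : int -> nat -> R)
  : int -> nat -> R :=
  fun m u => \sum_(i < u.+1)
    (if (i <= d)%N && (u - i <= e)%N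
     then q ^+ (i * e) * a m i * b (m - (i : nat)%:Z) (u - i)%N else 0).

(* q-derivative in the variable x of a function f(x,y); defined for x <> 0
   (value 0 at x = 0 is an irrelevant convention). *)
Definition qD {R : fieldType} (q : R) (F : R -> R -> R) : R -> R -> R :=
  fun x y => if x == 0 then 0 else (F (q * x) y - F x y) / ((q - 1) * x).

(* Main.v *)
Require Import Defs.
From mathcomp Require Import all_boot all_order all_algebra.
From mathcomp Require Import ring lra zify.
From Stdlib Require Import FunctionalExtensionality.
Set Implicit Arguments. Unset Strict Implicit. Unset Printing Implicit Defensive.
Import Order.TTheory GRing.Theory Num.Theory.
Local Open Scope ring_scope.

Section QS.
Variables (R : realFieldType) (Q : R).
Hypothesis HQ : 1 < Q.

Definition qn (n : nat) : R := (Q ^+ n - 1) / (Q - 1).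
Definition qP (n k : nat) : R := \prod_(j < k) qn (n - j).

Lemma Q1 : Q - 1 != 0. Proof. by rewrite subr_eq0 gt_eqF. Qed.
Lemma Q0 : Q != 0. Proof. by rewrite gt_eqF // (lt_trans ltr01 HQ). Qed.

Lemma qn0 : qn 0 = 0. Proof. by rewrite /qn expr0 subrr mul0r. Qed.
Lemma qn_neq0 n : (0 < n)%N -> qn n != 0.
Proof.
move=> Hn; rewrite /qn mulf_neq0 // ?invr_eq0 ?Q1 //.
by rewrite subr_eq0 gt_eqF // exprn_egt1 // -lt0n.
Qed.
Lemma qn_add a b : qn (a + b) = qn a + Q ^+ a * qn b.
Proof. rewrite /qn exprD; have H := Q1; by field. Qed.

Lemma qP0r n : qP n 0 = 1. Proof. by rewrite /qP big_ord0. Qed.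
Lemma qP_recr n k : qP n k.+1 = qP n k * qn (n - k).
Proof. by rewrite /qP big_ord_recr. Qed.
Lemma qP_recl n k : qP n.+1 k.+1 = qn n.+1 * qP n k.
Proof. by rewrite /qP big_ord_recl subn0; congr (_ * _); apply: eq_bigr => j _; rewrite /= subSS. Qed.
Lemma qP_gt n k : (n < k)%N -> qP n k = 0.
Proof. by move=> H; rewrite /qP (bigD1 (Ordinal H)) //= subnn qn0 mul0r. Qed.
Lemma qPnn_neq0 k : qP k k != 0.
Proof. by rewrite /qP prodf_seq_neq0; apply/allP => j _ /=; rewrite qn_neq0 // subn_gt0. Qed.

Definition qD' := qD Q.

Lemma Dmono (c : R) (e : nat) (x : R) : x != 0 ->
  (c * (Q * x) ^+ e - c * x ^+ e) / ((Q - 1) * x) = c * qn e * x ^+ e.-1.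
Proof.
move=> Hx; have H1 := Q1; case: e => [|e]; first by rewrite !expr0 subrr mul0r qn0 mulr0 mul0r.
rewrite /qn /= exprMn !exprS; field; by rewrite H1 Hx.
Qed.

Lemma Dsum (I : finType) (c : I -> R -> R) (n : I -> nat) nu x y : x != 0 ->
  iter nu qD' (fun x y => \sum_k c k y * x ^+ n k) x y =
  \sum_k c k y * qP (n k) nu * x ^+ (n k - nu).
Proof.
elim: nu x => [|nu IH] x Hx.
  by apply: eq_bigr => k _; rewrite qP0r mulr1 subn0.
rewrite iterS /qD' {1}/qD (negbTE Hx) IH ?mulf_neq0 ?Q0 // IH //.
rewrite -sumrB mulr_suml; apply: eq_bigr => k _.
idtac.
by rewrite Dmono // qP_recr subnS mulrA.
Qed.

Definition Gb n l := qP n l / qP l l.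

Lemma gaussE n l : (l <= n)%N -> gauss Q n l = Gb n l.
Proof.
move=> Hl; rewrite /gauss /Gb /qP -prodf_div; apply: eq_bigr => i _.
have Hi : (i <= n)%N by apply: leq_trans (ltnW (ltn_ord i)) Hl.
have Hil : (i < l)%N := ltn_ord i.
have En : Q ^+ n = Q ^+ i * Q ^+ (n - i) by rewrite -exprD subnKC.
have El : Q ^+ l = Q ^+ i * Q ^+ (l - i) by rewrite -exprD subnKC // ltnW.
rewrite En El.
have H1 := Q1; have H0 := Q0.
have Hd : qn (l - i) != 0 by apply: qn_neq0; rewrite subn_gt0.
move: Hd; rewrite /qn => Hd.
have Hq : Q ^+ i != 0 by rewrite expf_neq0.
have Hd' : Q ^+ (l - i) - 1 != 0.
  by apply: contraNneq Hd => ->; rewrite mul0r.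
rewrite /qn.
have Hx : Q ^+ i * Q ^+ (l - i) - Q ^+ i != 0.
  by rewrite -{2}(mulr1 (Q ^+ i)) -mulrBr mulf_neq0.
field; rewrite ?Hd' ?Hq ?H1 ?Hx //.
Qed.

Lemma Gb_n0 n : Gb n 0 = 1. Proof. by rewrite /Gb !qP0r divr1. Qed.
Lemma Gb_nn n : Gb n n = 1. Proof. by rewrite /Gb divff // qPnn_neq0. Qed.
Lemma Gb_gt n l : (n < l)%N -> Gb n l = 0. Proof. by move=> H; rewrite /Gb qP_gt // mul0r. Qed.

Lemma Gb_pascal n l : Gb n.+1 l.+1 = Gb n l + Q ^+ l.+1 * Gb n l.+1.
Proof.
rewrite /Gb (qP_recl n l) (qP_recr n l) (qP_recl l l).

have Hl := qPnn_neq0 l; have Hq := qn_neq0 (ltn0Sn l).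
have -> : qn n.+1 * qP n l = (qn l.+1 + Q ^+ l.+1 * qn (n - l)) * qP n l.
  case: (leqP l n) => H; last by rewrite qP_gt // !mulr0.
  by rewrite -qn_add addSn subnKC.
field; by rewrite Hl Hq.
Qed.

Lemma qP0l k : qP 0 k = (k == 0)%:R.
Proof. by case: k => [|k]; rewrite ?qP0r // qP_gt. Qed.

Lemma Vdm nu : forall a b, qP (a + b) nu =
  \sum_(l < nu.+1) Gb nu l * Q ^+ ((nu - l) * (a - l)) * qP a l * qP b (nu - l).
Proof.
elim: nu => [|nu IH] a b.
  by rewrite big_ord_recr big_ord0 /= add0r Gb_n0 !qP0r !mulr1.
case: a => [|a'].
  rewrite big_ord_recl /= big1 ?addr0; last first.
    by move=> i _; rewrite /bump /= qP0l /= mulr0 mul0r.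
  by rewrite Gb_n0 qP0r muln0 expr0 !mul1r subn0 add0n.
case: b => [|b'].
  rewrite big_ord_recr /= big1 ?add0r; last first.
    by move=> i _; rewrite qP0l subn_eq0 leqNgt ltn_ord /= mulr0.
  by rewrite Gb_nn subnn mul0n expr0 qP0r !mulr1 mul1r addn0.
set a := a'.+1; set b := b'.+1.
have -> : qP (a + b) nu.+1 = qn a * qP (a' + b) nu + Q ^+ a * qn b * qP (a + b') nu.
  by rewrite /a /b addSn qP_recl -addSn qn_add mulrDl addnS.
rewrite big_ord_recl.
under eq_bigr => i _ do rewrite lift0 Gb_pascal !mulrDl.
rewrite big_split /= !IH addrCA; congr (_ + _).
  rewrite mulr_sumr; apply: eq_bigr => i _.
  rewrite !subSS /a qP_recl; ring.
rewrite [in RHS]big_ord_recr /= (Gb_gt (ltnSn nu)) mulr0 !mul0r addr0.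
rewrite mulr_sumr [in LHS]big_ord_recl; congr (_ + _).
  rewrite !Gb_n0 !qP0r !subn0 /b qP_recl mulSn exprD; ring.
apply: eq_bigr => i _; rewrite lift0.
have Hi : (i < nu)%N := ltn_ord i.
have -> : (nu.+1 - i.+1)%N = (nu - i.+1).+1 by rewrite subSS subnSK.
rewrite /b qP_recl.
case: (leqP i.+1 a) => Ha; last first.
  by rewrite (qP_gt Ha); ring.
have E : (a + (nu - i.+1) * (a - i.+1) = i.+1 + (nu - i.+1).+1 * (a - i.+1))%N by nia.
rewrite [LHS](_ : _ = Gb nu i.+1 * (Q ^+ a * Q ^+ ((nu - i.+1) * (a - i.+1))) *
   qP a i.+1 * (qn b'.+1 * qP b' (nu - i.+1))); last by ring.
rewrite -exprD E exprD; ring.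
Qed.

Lemma hev_uniq n (c : nat -> R) :
  (forall x : R, x != 0 -> \sum_(i < n.+1) c i * x ^+ (n - i) = 0) ->
  forall i, (i <= n)%N -> c i = 0.
Proof.
move=> H i Hi.
pose p : {poly R} := \poly_(k < n.+1) c (n - k)%N.
have Hp : forall x : R, x != 0 -> p.[x] = 0.
  move=> x Hx; rewrite horner_poly -[RHS](H x Hx) (reindex_inj rev_ord_inj) /=.
  apply: eq_bigr => k _; rewrite subSS subKn //; exact: leq_ord k.
have p0 : p = 0.
  apply: (@roots_geq_poly_eq0 _ p [seq (j.+1)%:R | j <- iota 0 n.+1]).
  - apply/allP => z /mapP [j _ ->]; apply/rootP; apply: Hp.
    by rewrite pnatr_eq0.
  - rewrite map_inj_uniq ?iota_uniq //; move=> j k /eqP; by rewrite eqr_nat => /eqP [].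
  - by rewrite size_map size_iota size_poly.
have := congr1 (fun p : {poly R} => p`_(n - i)%N) p0.
by rewrite coef_poly coef0 ltnS leq_subr subKn.
Qed.

Lemma widen_sum n M (F : nat -> R) : (n <= M)%N ->
  (forall i, (n <= i)%N -> (i < M)%N -> F i = 0) ->
  \sum_(i < n) F i = \sum_(i < M) F i.
Proof.
move=> HnM HF; rewrite (big_ord_widen M F HnM) big_mkcond /=.
apply: eq_bigr => i _; case: ifP => // /negbT; rewrite -leqNgt => H.
by rewrite HF.
Qed.

Lemma coefE d (a : nat -> R) (A : nat -> nat -> R) :
  (forall l x, x != 0 -> hev (d - l) (A l) x 1 = iter l qD' (hev d a) x 1) ->
  forall l i, (i <= d - l)%N -> A l i = a i * qP (d - i) l.
Proof.
move=> H l i Hi.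
apply/eqP; rewrite -subr_eq0; apply/eqP.
apply: (@hev_uniq (d - l) (fun i => A l i - a i * qP (d - i) l)) => // x Hx.
have := H l x Hx; rewrite {1}/hev {1}/hev.
rewrite (Dsum (fun (i : 'I_d.+1) (y : R) => a i * y ^+ i) (fun i : 'I_d.+1 => (d - i)%N)) //.
have -> : \sum_(i < d.+1) a i * 1 ^+ i * qP (d - i) l * x ^+ (d - i - l) =
          \sum_(i < (d - l).+1) a i * qP (d - i) l * x ^+ (d - l - i).
  transitivity (\sum_(i < d.+1) a i * qP (d - i) l * x ^+ (d - l - i)).
    by apply: eq_bigr => j _; rewrite expr1n mulr1 subnAC.
  symmetry; apply: (widen_sum (n:=(d-l).+1) (M:=d.+1) (F:=fun j => a j * qP (d - j) l * x ^+ (d - l - j))).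
    by rewrite ltnS leq_subr.
  move=> j Hj Hj2; rewrite qP_gt ?mulr0 ?mul0r //; lia.
move=> E; under eq_bigr => j _ do rewrite mulrBl.
rewrite sumrB -E; under [X in _ - X]eq_bigr => j _ do rewrite expr1n mulr1.
by rewrite subrr.
Qed.

Lemma hevQP (d e M : nat) (a b : int -> nat -> R) m x y : (d + e < M)%N ->
  hev (d + e) (qprod Q d e a b m) x y =
  \sum_(u < M) \sum_(i < M)
     (if [&& (i <= u)%N, (i <= d)%N & (u - i <= e)%N]
      then Q ^+ (i * e) * a m i * b (m - (i : nat)%:Z) (u - i)%N * y ^+ u else 0)
     * x ^+ (d + e - u).
Proof.
move=> HM; rewrite /hev /qprod.
pose T (u i : nat) := Q ^+ (i * e) * a m i * b (m - (i : nat)%:Z) (u - i)%N.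
pose C (u i : nat) := if (i <= d)%N && (u - i <= e)%N then T u i else 0.
rewrite (widen_sum (n:=(d+e).+1) (M:=M) (F := fun u => (\sum_(i < u.+1) C u i) * y ^+ u * x ^+ (d + e - u))) //; last first.
  move=> u Hu HuM; rewrite big1 ?mul0r // => i _; rewrite /C.
  have := ltn_ord i; case: ifP => // /andP [H1 H2] H3; lia.
apply: eq_bigr => u _.
have -> : \sum_(i < u.+1) C u i = \sum_(i < M) (if (i <= u)%N then C u i else 0).
  transitivity (\sum_(i < u.+1) (if (i <= u)%N then C u i else 0)).
    by apply: eq_bigr => i _; rewrite -ltnS ltn_ord.
  apply: (widen_sum (n:=u.+1) (M:=M) (F:=fun i => if (i <= u)%N then C u i else 0)).
    exact: ltn_ord u.
  by move=> i Hi _; rewrite leqNgt Hi.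
rewrite !mulr_suml; apply: eq_bigr => i _; rewrite /C /T.
case: (i <= u)%N => /=; last by rewrite !mul0r.
by case: ifP => _; rewrite ?mul0r.
Qed.

Lemma Dsum2 M (c : nat -> nat -> R -> R) (n : nat -> nat) nu x y : x != 0 ->
  iter nu qD' (fun x y => \sum_(u < M) \sum_(i < M) c u i y * x ^+ n u) x y =
  \sum_(u < M) \sum_(i < M) c u i y * qP (n u) nu * x ^+ (n u - nu).
Proof.
move=> Hx.
have -> : (fun x y => \sum_(u < M) \sum_(i < M) c u i y * x ^+ n u) =
   (fun x y => \sum_(p : 'I_M * 'I_M) c p.1 p.2 y * x ^+ n p.1).
  by apply: functional_extensionality => x'; apply: functional_extensionality => y'; rewrite pair_bigA.
by rewrite (Dsum (fun (p : 'I_M * 'I_M) y => c p.1 p.2 y) (fun p => n p.1)) // pair_bigA.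
Qed.

Lemma hevQPl r s l k (a b : int -> nat -> R) m x y :
  hev ((r - l) + (s - k)) (qprod Q (r - l) (s - k) a b m) x y =
  \sum_(u < (r + s).+1) \sum_(i < (r + s).+1)
     (if [&& (i <= u)%N, (i <= r - l)%N & (u - i <= s - k)%N]
      then Q ^+ (i * (s - k)) * a m i * b (m - (i : nat)%:Z) (u - i)%N * y ^+ u else 0)
     * x ^+ ((r - l) + (s - k) - u).
Proof. apply: hevQP; lia. Qed.

Lemma point r s nu (f g : int -> nat -> R) (Fd Gd : nat -> int -> nat -> R) m (u i : nat) x y :
  (forall l m i, (i <= r - l)%N -> Fd l m i = f m i * qP (r - i) l) ->
  (forall l m i, (i <= s - l)%N -> Gd l m i = g m i * qP (s - i) l) ->
  (if [&& (i <= u)%N, (i <= r)%N & (u - i <= s)%N]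
   then Q ^+ (i * s) * f m i * g (m - (i : nat)%:Z) (u - i)%N * y ^+ u else 0)
  * qP (r + s - u) nu * x ^+ (r + s - u - nu) =
  \sum_(l < nu.+1) gauss Q nu l * Q ^+ ((nu - l) * (r - l)) *
   ((if [&& (i <= u)%N, (i <= r - l)%N & (u - i <= s - (nu - l))%N]
     then Q ^+ (i * (s - (nu - l))) * Fd l m i * Gd (nu - l)%N (m - (i : nat)%:Z) (u - i)%N * y ^+ u
     else 0) * x ^+ ((r - l) + (s - (nu - l)) - u)).
Proof.
move=> FdE GdE.
case: (boolP [&& (i <= u)%N, (i <= r)%N & (u - i <= s)%N]) => [/and3P [H1 H2 H3] | Hn]; last first.
  rewrite !mul0r big1 // => l _; rewrite ifF ?mul0r ?mulr0 //.
  apply/negbTE; apply: contra Hn => /and3P [A B C]; apply/and3P; split; lia.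
have Eab : (r + s - u = (r - i) + (s - (u - i)))%N by lia.
rewrite Eab Vdm mulr_sumr mulr_suml; apply: eq_bigr => l _.
have Hl : (l <= nu)%N := leq_ord l.
rewrite gaussE //.
case: (boolP ((l <= r - i)%N && (nu - l <= s - (u - i))%N)) => [/andP [Ha Hb] | Hn].
  rewrite ifT; last by apply/and3P; split; lia.
  rewrite FdE ?GdE; try lia.
  have E1 : (i * s + (nu - l) * (r - i - l) = (nu - l) * (r - l) + i * (s - (nu - l)))%N by nia.
  have E2 : ((r - i) + (s - (u - i)) - nu = (r - l) + (s - (nu - l)) - u)%N by lia.
  have E3 : Q ^+ ((nu - l) * (r - l)) =
            Q ^+ (i * s) * Q ^+ ((nu - l) * (r - i - l)) / Q ^+ (i * (s - (nu - l))).
    by rewrite -exprD E1 exprD mulfK // expf_neq0 // Q0.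
  rewrite E2 E3; have H0 : Q ^+ (i * (s - (nu - l))) != 0 by rewrite expf_neq0 // Q0.
  by field.
move: Hn; rewrite negb_and -!ltnNge => /orP [H|H].
  case: ifP => [/and3P [A B C] | _]; last by rewrite (qP_gt H) !(mul0r, mulr0).
  by rewrite FdE ?GdE; try lia; rewrite (qP_gt H) !(mul0r, mulr0).
case: ifP => [/and3P [A B C] | _]; last by rewrite (qP_gt H) !(mul0r, mulr0).
by rewrite FdE ?GdE; try lia; rewrite (qP_gt H) !(mul0r, mulr0).
Qed.
End QS.

Unset Implicit Arguments.

Theorem lemma4 (R : realFieldType) (q : nat)
  (Hq : exists p k : nat, prime p /\ (0 < k)%N /\ q = (p ^ k)%N)
  (r s : nat) (f g : int -> nat -> R)
  (Fd Gd : nat -> int -> nat -> R)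
  (HF : forall (l : nat) (m : int) (x y : R), x != 0 ->
        hev (r - l) (Fd l m) x y = iter l (qD q%:R) (hev r (f m)) x y)
  (HG : forall (l : nat) (m : int) (x y : R), x != 0 ->
        hev (s - l) (Gd l m) x y = iter l (qD q%:R) (hev s (g m)) x y)
  (nu : nat) (Hnu : (1 <= nu)%N) (m : int) (x y : R) (Hx : x != 0) :
  iter nu (qD q%:R) (hev (r + s) (qprod q%:R r s f g m)) x y =
  \sum_(l < nu.+1)
     gauss q%:R nu l * q%:R ^+ ((nu - l) * (r - l)) *
     hev ((r - l) + (s - (nu - l)))
         (qprod q%:R (r - l) (s - (nu - l)) (Fd l) (Gd (nu - l)%N) m) x y.
Proof.
have HQ : 1 < (q%:R : R).
  rewrite ltr1n; case: Hq => p [k [Hp [Hk ->]]].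
  have Hp1 := prime_gt1 Hp; case: k Hk => [//|k] _.
  rewrite expnS; have := expn_gt0 p k; rewrite (ltnW Hp1) /= => H; nia.
have FdE : forall l m i, (i <= r - l)%N -> Fd l m i = f m i * qP q%:R (r - i) l.
  move=> l m' i Hi; apply: (coefE HQ (A := fun l => Fd l m')) => // l' x' Hx'.
  exact: HF.
have GdE : forall l m i, (i <= s - l)%N -> Gd l m i = g m i * qP q%:R (s - i) l.
  move=> l m' i Hi; apply: (coefE HQ (A := fun l => Gd l m')) => // l' x' Hx'.
  exact: HG.
have -> : hev (r + s) (qprod q%:R r s f g m) = fun x y =>
  \sum_(u < (r + s).+1) \sum_(i < (r + s).+1)
     (if [&& (i <= u)%N, (i <= r)%N & (u - i <= s)%N]
      then q%:R ^+ (i * s) * f m i * g (m - (i : nat)%:Z) (u - i)%N * y ^+ u else 0)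
     * x ^+ (r + s - u).
  by apply: functional_extensionality => x'; apply: functional_extensionality => y';
     apply: hevQP.
rewrite (Dsum2 HQ _ (fun u i y => (if [&& (i <= u)%N, (i <= r)%N & (u - i <= s)%N]
      then q%:R ^+ (i * s) * f m i * g (m - (i : nat)%:Z) (u - i)%N * y ^+ u else 0))
   (fun u => (r + s - u)%N) nu y Hx).
symmetry; under eq_bigr => l _ do rewrite (hevQPl HQ r s l (nu - l)) mulr_sumr.
rewrite exchange_big /=; apply: eq_bigr => u _.
under eq_bigr => l _ do rewrite mulr_sumr.
rewrite exchange_big /=; apply: eq_bigr => i _.
symmetry; exact: point.
Qed.
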